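(* For every base $b\ge 2$ there exist infinitely many positive integers that are not $b$-wARH numbers.
   Context: Fix a base $b\ge 2$. $s_b(N)$ is the sum of the base-$b$ digits of $N$. For a positive integer $X$, its reversal $X^R$ is the integer whose base-$b$ representation is that of $X$ written in reverse order (leading zeros of the result are dropped). A positive integer $N$ is a $b$-wARH number if there exists an integer $A\ge 0$ such that $N=(A+s_b(N))+(A+s_b(N))^R$. *)

(* Defs.v *)
From mathcomp Require Import all_boot.
Set Implicit Arguments. Unset Strict Implicit. Unset Printing Implicit Defensive.

(* Base-b digits of n, least significant first (empty list for n = 0).
   Fuel n suffices since n %/ b < n for n > 0 and b >= 2. *)
Fixpoint digits_aux (b fuel n : nat) : seq nat :=
  match fuel with
  | 0 => [::]
  | fuel'.+1 => if n == 0 then [::] else (n %% b) :: digits_aux b fuel' (n %/ b)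
  end.

Definition digits (b n : nat) : seq nat := digits_aux b n n.

Definition from_digits (b : nat) (s : seq nat) : nat :=
  foldr (fun d acc => d + b * acc) 0 s.

Definition digit_sum (b n : nat) : nat := sumn (digits b n).

(* X^R: reverse the base-b representation (leading zeros of the result
   disappear automatically when evaluating). *)
Definition reversal (b n : nat) : nat := from_digits b (rev (digits b n)).

Definition is_wARH (b N : nat) : Prop :=
  0 < N /\ exists A : nat, N = (A + digit_sum b N) + reversal b (A + digit_sum b N).

(* Main.v *)
Require Import Defs.
From mathcomp Require Import all_boot.
From mathcomp Require Import zify.

Lemma digits_aux0 b f : digits_aux b f 0 = [::].
Proof. by case: f. Qed.

Lemma from_digits_cat b s1 s2 :
  from_digits b (s1 ++ s2) = from_digits b s1 + b ^ (size s1) * from_digits b s2.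
Proof.
elim: s1 => [|x s IH] /=; first by rewrite expn0 mul1n.
rewrite IH expnS; lia.
Qed.

Lemma from_digits_rcons b s x :
  from_digits b (rcons s x) = from_digits b s + b ^ (size s) * x.
Proof. rewrite -cats1 from_digits_cat /=; lia. Qed.

Lemma digits_aux_lt b f n : 2 <= b -> all (fun d => d < b) (digits_aux b f n).
Proof.
move=> hb; elim: f n => [|f IH] n //=.
case: (n == 0) => //=; rewrite IH andbT ltn_mod; lia.
Qed.

Lemma digits_aux_val b f n : 2 <= b -> n <= f -> from_digits b (digits_aux b f n) = n.
Proof.
move=> hb; elim: f n => [|f IH] n /=.
  by rewrite leqn0 => /eqP ->.
move=> hn; case: eqP => [->|/eqP n0] //=.
rewrite IH; first by rewrite addnC mulnC -divn_eq.
have : n %/ b < n by rewrite ltn_Pdiv //; lia.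
lia.
Qed.

Lemma digits_aux_last b f n : 2 <= b -> n <= f -> 0 < n ->
  forall x, 0 < last x (digits_aux b f n).
Proof.
move=> hb; elim: f n => [|f IH] n /=; first lia.
move=> hn n0 x; have -> : (n == 0) = false by lia.
rewrite /=.
case: (posnP (n %/ b)) => q.
  rewrite q digits_aux0 /=.
  have hnb : n < b by case: (ltnP n b) => // h; have := divn_gt0 n (ltnW hb); rewrite h; lia.
  by rewrite modn_small.
apply: IH => //.
have : n %/ b < n by rewrite ltn_Pdiv //; lia.
lia.
Qed.

Lemma from_digits_lt b s : 2 <= b -> all (fun d => d < b) s -> from_digits b s < b ^ size s.
Proof.
move=> hb; elim: s => [|x s IH] //= /andP [hx hs].
have := IH hs; rewrite expnS; nia.
Qed.

Lemma not_sum_rev b d (hb : 2 <= b) (hd : 2 <= d) X :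
  X + reversal b X <> b ^ d.
Proof.
move=> E.
have X0 : 0 < X.
  case: (posnP X) => // X0; move: E; rewrite X0 /reversal /digits /=.
  have : 0 < b ^ d by rewrite expn_gt0; lia.
  lia.
have hv := @digits_aux_val b X X hb (leqnn X).
have hl := @digits_aux_lt b X X hb.
have hlast := @digits_aux_last b X X hb (leqnn X) X0.
move: E; rewrite /reversal /digits.
move: hv hl hlast; case/lastP: (digits_aux b X X) => [|s xt].
  by move=> /= h; lia.
move=> hv hl hlast.
have xt0 : 0 < xt by have := hlast 0; rewrite last_rcons.
have hlr : all (fun d => d < b) (rev (rcons s xt)) by rewrite all_rev.
have Xlt := @from_digits_lt b _ hb hl.
have Rlt := @from_digits_lt b _ hb hlr.
rewrite size_rev in Rlt; rewrite hv in Xlt.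
rewrite size_rcons in Xlt Rlt.
have Xge : b ^ size s <= X.
  rewrite -hv from_digits_rcons; have := leq_pmulr (b ^ size s) xt0; lia.
move=> E; rewrite rev_rcons /= in Rlt E.
idtac.
case: (ltngtP (size s) (d - 1)) => hk.
-
  have : b ^ (size s).+1 * 2 <= b ^ d.
    have -> : d = (d - (size s).+2) + (size s).+2 by lia.
    rewrite expnD !expnS.
    have : 0 < b ^ (d - (size s).+2) by rewrite expn_gt0; lia.
    move: (b ^ (d - _)) (b ^ size s) => q r hq.
    have h1 : b * r * 2 <= b * r * b by rewrite leq_mul2l; lia.
    have h2 : b * (b * r) <= q * (b * (b * r)) by rewrite leq_pmull.
    lia.
  lia.
-
  have : b ^ d <= b ^ size s by rewrite leq_exp2l //; lia.
  lia.
-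
  move: hv E hk; clear -hb hd xt0; case: s => [|x0 t] /= hv E hk; first lia.
  rewrite -hv /= rev_cons !from_digits_rcons size_rev in E.
  have hd' : d = (size t).+2 by lia.
  rewrite hd' in E.
  set M := from_digits b t in E; set M' := from_digits b (rev t) in E.
  set p := b ^ size t in E.
  have hS : b %| x0 + xt.
    have : b %| b ^ (size t).+2 by rewrite expnS dvdn_mulr.
    rewrite -E.
    have -> : x0 + b * (M + p * xt) + (xt + b * (M' + p * x0))
              = (x0 + xt) + b * (M + p * xt + M' + p * x0) by lia.
    by rewrite dvdn_addl // dvdn_mulr.
  have hSb : b <= x0 + xt by apply: dvdn_leq => //; lia.
  move: E; rewrite !expnS -/p.
  have : 0 < p by rewrite expn_gt0; lia.
  nia.
Qed.

Theorem proposition9 (b : nat) (hb : 2 <= b) :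
  forall m : nat, exists N : nat, m < N /\ ~ is_wARH b N.
Proof.
move=> m; exists (b ^ m.+2); split.
  have := ltn_expl m.+2 hb; lia.
move=> [_ [A E]]; apply: (@not_sum_rev b m.+2 hb _ _ (esym E)); lia.
Qed.
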